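(* Let $p(t)=\sum_{k=0}^\infty a_kt^k$ be a real power series with $-1<a_i<1$ for all $i\ge0$ and $\sum_{i=0}^\infty|a_i|\le1$. Let $p^{[1]}=p$, $p^{[n+1]}=p(p^{[n]})$, $p^{[n]}(t)=\sum_{k=0}^\infty a_k^{[n]}t^k$, and $a^{[n]}=\sup\{|a_k^{[n]}|:k\ge1\}$. Then $\lim_{n\to\infty}a^{[n]}=0$.
   Context: Composition is composition of formal power series; under $\sum|a_i|\le1$ the coefficients of each iterate are given by absolutely convergent sums. *)

(* Defs.v *)
From HB Require Import structures.
From mathcomp Require Import all_boot all_order all_algebra.
From mathcomp Require Import all_classical all_reals all_analysis.
Set Implicit Arguments. Unset Strict Implicit. Unset Printing Implicit Defensive.
Import Order.TTheory GRing.Theory Num.Theory.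
Import numFieldNormedType.Exports.
Local Open Scope ring_scope.

(* A real formal power series sum_k b k t^k is represented by its
   coefficient sequence b : nat -> R. *)

Fixpoint pow_coef (R : realType) (b : nat -> R) (j : nat) : nat -> R :=
  match j with
  | 0 => fun k => (k == 0)%:R
  | j'.+1 => fun k => \sum_(i < k.+1) b i * pow_coef b j' (k - i)%N
  end.

(* Composition p(q) of power series with coefficients a, b:
   coefficient of t^k is sum_{j>=0} a_j [t^k] q^j (an infinite series,
   the limit of its partial sums; absolutely convergent under the
   standing hypotheses). *)
Definition comp_coef (R : realType) (a b : nat -> R) (k : nat) : R :=
  limn (series (fun j => a j * pow_coef b j k)).

(* iterp a n = coefficients of p^{[n]}: p^{[0]}(t) = t,
   p^{[n+1]} = p(p^{[n]}); hence p^{[1]} = p(t) = p. *)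
Fixpoint iterp (R : realType) (a : nat -> R) (n : nat) : nat -> R :=
  match n with
  | 0 => fun k => (k == 1)%:R
  | m.+1 => comp_coef a (iterp a m)
  end.

Definition sup_coef (R : realType) (a : nat -> R) (n : nat) : \bar R :=
  ereal_sup [set (`|iterp a n k|)%:E | k in [set k : nat | (1 <= k)%N]].

(* Main.v *)
Require Import Defs.
From HB Require Import structures.
From mathcomp Require Import all_boot all_order all_algebra.
From mathcomp Require Import all_classical all_reals all_analysis.
From mathcomp Require Import lra zify ring.
Import Order.TTheory GRing.Theory Num.Theory.
Import numFieldNormedType.Exports.
Local Open Scope ring_scope.

Set Implicit Arguments. Unset Strict Implicit. Unset Printing Implicit Defensive.

Section P1.
Variable R : realType.
Implicit Types (u v c t : nat -> R).

Definition good u := (forall i, 0 <= u i) /\ (forall n, \sum_(i < n) u i <= 1).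
Definition cconv u v := fun s => \sum_(m < s.+1) u m * v (s - m)%N.

Lemma cconv_ge0 u v : (forall i, 0 <= u i) -> (forall i, 0 <= v i) ->
  forall s, 0 <= cconv u v s.
Proof. by move=> hu hv s; apply: sumr_ge0 => i _; exact: mulr_ge0. Qed.

Lemma cconv_psum u v n :
  \sum_(s < n) cconv u v s = \sum_(m < n) u m * \sum_(l < n - m) v l.
Proof.
elim: n => [|n IH]; first by rewrite !big_ord0.
rewrite big_ord_recr /= IH.
have -> : \sum_(m < n.+1) u m * \sum_(l < n.+1 - m) v l
        = \sum_(m < n.+1) (u m * \sum_(l < n - m) v l + u m * v (n - m)%N).
  apply: eq_bigr => i _; rewrite subSn; last by rewrite -ltnS.
  by rewrite big_ord_recr /= mulrDr.
by rewrite big_split /= big_ord_recr /= subnn big_ord0 mulr0 addr0.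
Qed.

Lemma cconv_good u v : good u -> good v -> good (cconv u v).
Proof.
move=> [hu1 hu2] [hv1 hv2]; split; first exact: cconv_ge0.
move=> n; rewrite cconv_psum; apply: le_trans (hu2 n).
apply: ler_sum => i _; rewrite -[X in _ <= X]mulr1.
by apply: ler_wpM2l; [exact: hu1 | exact: hv2].
Qed.

Lemma good_pow c j : good c -> good (pow_coef c j).
Proof.
move=> hc; elim: j => [|j IH]; last by have H := @cconv_good _ _ hc IH; exact H.
split; first by move=> i /=; exact: ler0n.
case=> [|n]; first by rewrite big_ord0.
by rewrite big_ord_recl big1 /= ?addr0 // => i _.
Qed.

Lemma good_le1 u i : good u -> u i <= 1.
Proof.
move=> [h1 h2]; apply: le_trans (h2 i.+1).
rewrite big_ord_recr /= lerDr; exact: sumr_ge0.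
Qed.

Lemma good_ge0 u i : good u -> 0 <= u i.
Proof. by case. Qed.

Lemma series_E t (B : R) : (forall i, 0 <= t i) ->
  (forall n, \sum_(i < n) t i <= B) ->
  cvgn (series t) /\ (limn (series t))%:E = (\sum_(i <oo) (t i)%:E)%E.
Proof.
move=> t0 tB.
have cv : cvgn (series t).
  apply: nondecreasing_is_cvgn.
    by apply/nondecreasing_seqP => n; rewrite !seriesEord /= big_ord_recr /= lerDl.
  exists B; move=> _ [n _ <-]; rewrite seriesEord /=; exact: tB.
split; first exact: cv.
rewrite -EFin_lim //.
by apply: congr_lim; apply: funext => n /=; rewrite sumEFin seriesEnat.
Qed.

End P1.

Section P2.
Variable R : realType.
Implicit Types (u v c t : nat -> R).

Lemma interchT (x : nat -> nat -> \bar R) : (forall m l, (0 <= x m l)%E) ->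
  (\sum_(m <oo) \sum_(l <oo) x m l = \sum_(l <oo) \sum_(m <oo) x m l)%E.
Proof. by move=> x0; exact: (@nneseries_interchange R x xpredT xpredT x0). Qed.

Lemma eseries_fin (f : nat -> \bar R) N : (forall m, (0 <= f m)%E) ->
  (forall m, (N <= m)%N -> f m = 0%E) ->
  (\sum_(m <oo) f m = \sum_(m < N) f m)%E.
Proof.
move=> f0 fN.
rewrite (nneseries_split 0 N) // eseries0 ?adde0 //; last first.
  by move=> i; rewrite add0n => /fN.
by rewrite add0n big_mkord.
Qed.

Lemma esum_le1 u : good u -> (\sum_(j <oo) (u j)%:E <= 1)%E.
Proof.
move=> [u0 u1]; have [cv <-] := @series_E _ u 1 u0 u1.
rewrite lee_fin; apply: limr_le cv _; apply: nearW => n.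
by rewrite seriesEord; exact: u1.
Qed.

Lemma compE u c k : good u -> good c ->
  cvgn (series (fun j => u j * pow_coef c j k)) /\
  (comp_coef u c k)%:E = (\sum_(j <oo) (u j * pow_coef c j k)%:E)%E.
Proof.
move=> hu hc; apply: (@series_E _ _ 1).
  by move=> i; apply: mulr_ge0; [exact: good_ge0 | exact/good_ge0/good_pow].
move=> n; apply: le_trans (hu.2 n); apply: ler_sum => i _.
apply: ler_piMr; first exact: good_ge0.
exact/good_le1/good_pow.
Qed.

Lemma compEE u c k : good u -> good c ->
  (comp_coef u c k)%:E = (\sum_(j <oo) (u j * pow_coef c j k)%:E)%E.
Proof. by move=> hu hc; case: (compE k hu hc). Qed.

Lemma comp_good u c : good u -> good c -> good (comp_coef u c).
Proof.
move=> hu hc; split.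
  move=> i; rewrite -lee_fin compEE //; apply: nneseries_ge0 => j _ _.
  rewrite lee_fin; apply: mulr_ge0; [exact: good_ge0 | exact/good_ge0/good_pow].
move=> n; rewrite -lee_fin -sumEFin.
rewrite (eq_bigr (fun k : 'I_n => \sum_(j <oo) (u j * pow_coef c j k)%:E)%E);
  last by move=> k _; rewrite compEE.
rewrite -nneseries_sum; last first.
  move=> k j _; rewrite lee_fin; apply: mulr_ge0;
  [exact: good_ge0 | exact/good_ge0/good_pow].
apply: le_trans (esum_le1 hu); apply: lee_nneseries.
  move=> j _ _; apply: sume_ge0 => k _; rewrite lee_fin; apply: mulr_ge0;
  [exact: good_ge0 | exact/good_ge0/good_pow].
move=> j _; rewrite sumEFin lee_fin -mulr_sumr; apply: ler_piMr.
  exact: good_ge0.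
exact: (good_pow j hc).2.
Qed.

End P2.

Section P3.
Variable R : realType.
Implicit Types (u v w c t : nat -> R).

Lemma cconv_coef u v (p q : {poly R}) k :
  (forall i, (i <= k)%N -> u i = p`_i) -> (forall i, (i <= k)%N -> v i = q`_i) ->
  cconv u v k = (p * q)`_k.
Proof.
move=> hu hv; rewrite coefM /cconv; apply: eq_bigr => i _.
have ik : (i <= k)%N by rewrite -ltnS.
by rewrite hu // hv // leq_subr.
Qed.

Lemma cconv_assoc u v w : cconv (cconv u v) w = cconv u (cconv v w).
Proof.
apply: funext => k.
pose P (f : nat -> R) : {poly R} := \poly_(i < k.+1) f i.
have hP (f : nat -> R) i : (i <= k)%N -> f i = (P f)`_i by move=> ik; rewrite coef_poly ltnS ik.
have e1 (x y : nat -> R) i : (i <= k)%N -> cconv x y i = (P x * P y)`_i.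
  by move=> ik; apply: cconv_coef => j jk; apply: hP; apply: leq_trans jk ik.
rewrite (@cconv_coef _ _ (P u * P v) (P w)); [|exact: e1|exact: hP].
rewrite (@cconv_coef _ _ (P u) (P v * P w)) ?mulrA //; [exact: hP|exact: e1].
Qed.

Lemma cconv_congr u v v' k : (forall i, (i <= k)%N -> v i = v' i) ->
  cconv u v k = cconv u v' k.
Proof. by move=> h; apply: eq_bigr => i _; rewrite h // leq_subr. Qed.

Lemma pow_add c m l : cconv (pow_coef c m) (pow_coef c l) = pow_coef c (m + l).
Proof.
elim: m => [|m IH]; apply: funext => k.
  rewrite /cconv big_ord_recl big1 => [|i _]; last by rewrite /= mul0r.
  by rewrite /= mul1r subn0 addr0.
rewrite addSn.
have -> : pow_coef c m.+1 = cconv c (pow_coef c m) by [].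
by rewrite cconv_assoc IH.
Qed.

End P3.

Section P4.
Variable R : realType.
Implicit Types (u v w c t : nat -> R).

Lemma diag_sum (x : nat -> nat -> \bar R) : (forall m l, 0 <= x m l)%E ->
  (\sum_(m <oo) \sum_(l <oo) x m l =
   \sum_(s <oo) \sum_(m < s.+1) x m (s - m)%N)%E.
Proof.
move=> x0.
transitivity (\sum_(s <oo) \sum_(m <oo)
   (if (m <= s)%N then x m (s - m)%N else 0))%E; last first.
  apply: eq_eseriesr => s _; rewrite (@eseries_fin _ _ s.+1).
  - by apply: eq_bigr => i _; have := ltn_ord i; rewrite ltnS => ->.
  - by move=> m; case: ifP.
  - by move=> m; rewrite ltnNge => /negbTE ->.
rewrite [RHS](@interchT _ (fun s m => if (m <= s)%N then x m (s - m)%N else 0%E)); last by move=> s m; case: ifP.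
apply: eq_eseriesr => m _.
rewrite -(@eseries_mkcond _ (fun s => (m <= s)%N) (fun s => x m (s - m)%N)).
rewrite -ereal_series.
rewrite -(@nneseries_addn _ (fun s => x m (s - m)%N) m) //.
by apply: eq_eseriesr => l _; rewrite addnK.
Qed.

Lemma M2 u v c k : good u -> good v -> good c ->
  cconv (comp_coef u c) (comp_coef v c) k = comp_coef (cconv u v) c k.
Proof.
move=> hu hv hc.
have P0 j i : 0 <= pow_coef c j i := good_ge0 i (good_pow j hc).
have u0 i : 0 <= u i := good_ge0 i hu.
have v0 i : 0 <= v i := good_ge0 i hv.
apply: EFin_inj.
rewrite (compEE k (cconv_good hu hv) hc) /cconv -sumEFin.
have step i : ((comp_coef u c i) * (comp_coef v c (k - i)))%:E =
  (\sum_(m <oo) \sum_(l <oo)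
     ((u m * pow_coef c m i) * (v l * pow_coef c l (k - i)))%:E)%E.
  rewrite EFinM (compEE i hu hc) muleC -nneseriesZl; last first.
    by move=> m _; rewrite lee_fin mulr_ge0.
  apply: eq_eseriesr => m _; rewrite muleC (compEE (k - i) hv hc).
  rewrite -nneseriesZl; last by move=> l _; rewrite lee_fin mulr_ge0.
  by apply: eq_eseriesr => l _; rewrite -EFinM.
under eq_bigr => i _ do rewrite step.
rewrite -nneseries_sum; last first.
  move=> i m _; apply: nneseries_ge0 => l _ _.
  by rewrite lee_fin mulr_ge0 // mulr_ge0.
transitivity (\sum_(m <oo) \sum_(l <oo)
   ((u m * v l) * pow_coef c (m + l) k)%:E)%E.
  apply: eq_eseriesr => m _; rewrite -nneseries_sum; last first.
    by move=> i l _; rewrite lee_fin mulr_ge0 // mulr_ge0.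
  apply: eq_eseriesr => l _; rewrite sumEFin; congr (_%:E).
  rewrite -pow_add /cconv mulr_sumr; apply: eq_bigr => i _.
  by rewrite mulrACA.
rewrite diag_sum; last by move=> m l; rewrite lee_fin mulr_ge0 // mulr_ge0.
apply: eq_eseriesr => s _; rewrite sumEFin; congr (_%:E).
rewrite mulr_suml; apply: eq_bigr => i _.
by rewrite subnKC // -ltnS.
Qed.

Lemma MUL b c j k : good b -> good c ->
  pow_coef (comp_coef b c) j k = comp_coef (pow_coef b j) c k.
Proof.
move=> hb hc; elim: j k => [|j IH] k.
  apply: EFin_inj; rewrite (compEE k (good_pow 0 hb) hc) (@eseries_fin _ _ 1).
  - by rewrite big_ord_recl big_ord0 /= mul1r adde0.
  - move=> m; rewrite lee_fin; apply: mulr_ge0.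
      exact: ((good_pow 0 hb).1 m).
    exact: ((good_pow m hc).1 k).
  - by case=> // m _ /=; rewrite mul0r.
change (cconv (comp_coef b c) (pow_coef (comp_coef b c) j) k =
  comp_coef (cconv b (pow_coef b j)) c k).
have -> : pow_coef (comp_coef b c) j = comp_coef (pow_coef b j) c.
  by apply: funext.
by rewrite M2 //; exact: good_pow.
Qed.

Lemma ASSOC a b c k : good a -> good b -> good c ->
  comp_coef a (comp_coef b c) k = comp_coef (comp_coef a b) c k.
Proof.
move=> ha hb hc; have hbc := comp_good hb hc; have hab := comp_good ha hb.
have P0 j i : 0 <= pow_coef c j i := good_ge0 i (good_pow j hc).
have Q0 j i : 0 <= pow_coef b j i := good_ge0 i (good_pow j hb).
have a0 i : 0 <= a i := good_ge0 i ha.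
apply: EFin_inj; rewrite (compEE k ha hbc) (compEE k hab hc).
transitivity (\sum_(j <oo) \sum_(m <oo)
   (a j * (pow_coef b j m * pow_coef c m k))%:E)%E.
  apply: eq_eseriesr => j _.
  rewrite MUL // EFinM (compEE k (good_pow j hb) hc) -nneseriesZl.
    by apply: eq_eseriesr => m _; rewrite EFinM.
  by move=> m _; rewrite lee_fin mulr_ge0.
rewrite interchT; last by move=> j m; rewrite lee_fin mulr_ge0 // mulr_ge0.
apply: eq_eseriesr => m _; rewrite EFinM muleC (compEE m ha hb) -nneseriesZl.
  apply: eq_eseriesr => j _; rewrite -EFinM; congr (_%:E).
  by rewrite mulrA mulrC.
by move=> j _; rewrite lee_fin mulr_ge0.
Qed.

End P4.

Section P5.
Variable R : realType.
Implicit Types (u v w c : nat -> R).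

Definition idp : nat -> R := fun k => (k == 1)%:R.
Definition et (t : R) : nat -> R := fun k => if k == 0 then t else 0.
Definition ev u (t : R) := comp_coef u (et t) 0.

Lemma good_idp : good idp.
Proof.
split; first by move=> i; exact: ler0n.
case=> [|[|n]]; first by rewrite big_ord0.
  by rewrite big_ord_recl big_ord0 /idp /= addr0.
rewrite big_ord_recl big_ord_recl big1 /idp /= ?add0r ?addr0 //.
Qed.

Lemma good_et t : 0 <= t <= 1 -> good (et t).
Proof.
move=> /andP[t0 t1]; split; first by move=> [|i] //=.
case=> [|n]; first by rewrite big_ord0.
by rewrite big_ord_recl big1 /= ?addr0 // => i _.
Qed.

Lemma pow_et t j k : pow_coef (et t) j k = (k == 0)%:R * t ^+ j.
Proof.
elim: j k => [|j IH] k; first by rewrite expr0 mulr1.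
rewrite /= big_ord_recl big1 ?addr0; last by move=> i _; rewrite /et /= mul0r.
by rewrite /et /= subn0 IH exprS mulrCA.
Qed.

Lemma pow_idp j k : pow_coef idp j k = (k == j)%:R.
Proof.
elim: j k => [|j IH] k //.
case: k => [|k]; first by rewrite /= big_ord_recl big_ord0 /idp /= mul0r addr0.
rewrite /= big_ord_recl /idp /= mul0r add0r big_ord_recl big1 /=.
  by rewrite mul1r addr0 subSS subn0 IH eqSS.
by move=> i _; rewrite mul0r.
Qed.

Lemma pow1 c k : pow_coef c 1 k = c k.
Proof.
rewrite /= big_ord_recr /= subnn eqxx mulr1 big1 ?add0r // => i _.
by rewrite subn_eq0 leqNgt ltn_ord mulr0.
Qed.

Lemma comp_id_l c : good c -> comp_coef idp c = c.
Proof.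
move=> hc; apply: funext => k; apply: EFin_inj.
rewrite (compEE k good_idp hc) (@eseries_fin _ _ 2).
- rewrite big_ord_recl big_ord_recl big_ord0 /idp /= mul0r mul1r add0e adde0.
  by rewrite -(pow1 c k).
- move=> m; rewrite lee_fin; apply: mulr_ge0; first exact: ler0n.
  exact: ((good_pow m hc).1 k).
- by case=> [|[|m]] //= _; rewrite /idp /= mul0r.
Qed.

Lemma comp_id_r b : good b -> comp_coef b idp = b.
Proof.
move=> hb; apply: funext => k; apply: EFin_inj.
rewrite (compEE k hb good_idp) (@eseries_fin _ _ k.+1).
- rewrite big_ord_recr /= pow_idp eqxx mulr1 big1 ?add0e // => i _.
  by rewrite pow_idp eq_sym (ltn_eqF (ltn_ord i)) mulr0.
- move=> m; rewrite lee_fin pow_idp; apply: mulr_ge0; last exact: ler0n.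
  exact: good_ge0.
- by move=> m km; rewrite pow_idp eq_sym (gtn_eqF km) mulr0.
Qed.

Lemma ev_E u t : good u -> 0 <= t <= 1 ->
  (ev u t)%:E = (\sum_(j <oo) (u j * t ^+ j)%:E)%E.
Proof.
move=> hu ht; rewrite /ev (compEE 0 hu (good_et ht)).
by apply: eq_eseriesr => j _; rewrite pow_et mul1r.
Qed.

Lemma comp_et u t : good u -> 0 <= t <= 1 -> comp_coef u (et t) = et (ev u t).
Proof.
move=> hu ht; apply: funext => -[|k] //.
apply: EFin_inj; rewrite (compEE k.+1 hu (good_et ht)) (@eseries_fin _ _ 0).
- by rewrite big_ord0.
- by move=> m; rewrite pow_et /= mul0r mulr0.
- by move=> m _; rewrite pow_et /= mul0r mulr0.
Qed.

Lemma ev_good u t : good u -> 0 <= t <= 1 -> 0 <= ev u t <= 1.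
Proof.
move=> hu ht; have h := comp_good hu (good_et ht).
by rewrite /ev (good_ge0 0 h) (good_le1 0 h).
Qed.

Lemma ev_comp b c t : good b -> good c -> 0 <= t <= 1 ->
  ev (comp_coef b c) t = ev b (ev c t).
Proof.
move=> hb hc ht; rewrite /ev -ASSOC //; last exact: good_et.
by rewrite comp_et.
Qed.

Lemma ev0 u : good u -> ev u 0 = u 0.
Proof.
move=> hu; apply: EFin_inj; rewrite ev_E ?lexx ?ler01 // (@eseries_fin _ _ 1).
- by rewrite big_ord_recl big_ord0 expr0 mulr1 adde0.
- move=> m; rewrite lee_fin; apply: mulr_ge0; first exact: good_ge0.
  exact: exprn_ge0.
- by case=> // m _; rewrite expr0n /= mulr0.
Qed.

Lemma ev_idp t : 0 <= t <= 1 -> ev idp t = t.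
Proof. by move=> ht; rewrite /ev comp_id_l //; exact: good_et. Qed.

Lemma ev_mono u s t : good u -> 0 <= s -> s <= t -> t <= 1 -> ev u s <= ev u t.
Proof.
move=> hu s0 st t1.
have hs : 0 <= s <= 1 by rewrite s0 (le_trans st t1).
have ht : 0 <= t <= 1 by rewrite (le_trans s0 st) t1.
rewrite -lee_fin !ev_E //; apply: lee_nneseries.
  move=> j _ _; rewrite lee_fin; apply: mulr_ge0; first exact: good_ge0.
  exact: exprn_ge0.
move=> j _; rewrite lee_fin; apply: ler_wpM2l; first exact: good_ge0.
by rewrite lerXn2r // nnegrE (le_trans s0 st).
Qed.

Lemma ev_psum u t N : good u -> 0 <= t <= 1 ->
  \sum_(j < N) u j * t ^+ j <= ev u t.
Proof.
move=> hu ht; rewrite -lee_fin ev_E // -sumEFin.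
have := @nneseries_lim_ge R (fun j => (u j * t ^+ j)%:E) xpredT 0 N.
rewrite big_mkord; apply.
move=> n _ _; rewrite lee_fin; apply: mulr_ge0; first exact: good_ge0.
by apply: exprn_ge0; case/andP: ht.
Qed.

Lemma ev_two u t z : good u -> 0 <= t <= 1 -> (1 <= z)%N ->
  u 0 + u z * t ^+ z <= ev u t.
Proof.
move=> hu ht z1; apply: le_trans (ev_psum z.+1 hu ht).
rewrite big_ord_recr /= lerD2r; case: z z1 => // z _.
rewrite big_ord_recl /= expr0 mulr1 lerDl; apply: sumr_ge0 => i _.
apply: mulr_ge0; first exact: good_ge0.
by apply: exprn_ge0; case/andP: ht.
Qed.

End P5.

Section P6.
Variable R : realType.
Implicit Types (u v w c b : nat -> R).

Lemma good_iter b n : good b -> good (iterp b n).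
Proof.
move=> hb; elim: n => [|n IH]; first exact: good_idp.
exact: comp_good.
Qed.

Lemma iter_comm b n : good b -> iterp b n.+1 = comp_coef (iterp b n) b.
Proof.
move=> hb; elim: n => [|n IH].
  have -> : iterp b 1 = comp_coef b (@idp R) by [].
  by rewrite comp_id_r // -[iterp b 0]/(@idp R) comp_id_l.
have -> : iterp b n.+2 = comp_coef b (iterp b n.+1) by [].
apply: funext => k; rewrite {1}IH ASSOC //; exact: good_iter.
Qed.

Lemma ev_le u t M : good u -> 0 <= t <= 1 ->
  (forall N, \sum_(j < N) u j * t ^+ j <= M) -> ev u t <= M.
Proof.
move=> hu ht hM; rewrite -lee_fin ev_E //; apply: lime_le.
  apply: is_cvg_nneseries => n _ _; rewrite lee_fin; apply: mulr_ge0.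
    exact: good_ge0.
  by apply: exprn_ge0; case/andP: ht.
by apply: nearW => N; rewrite sumEFin lee_fin big_mkord.
Qed.

Lemma XB (s t : R) j : 0 <= s -> s <= t -> t <= 1 ->
  t ^+ j - s ^+ j <= j%:R * (t - s).
Proof.
move=> s0 st t1; elim: j => [|j IH]; first by rewrite !expr0 subrr mul0r.
have X0 : s ^+ j <= t ^+ j by rewrite lerXn2r // nnegrE (le_trans s0 st).
have Y0 : 0 <= s ^+ j by exact: exprn_ge0.
have Y1 : s ^+ j <= 1 by apply: exprn_ile1 => //; exact: le_trans st t1.
rewrite !exprS -natr1.
set X := t ^+ j in X0 IH *; set Y := s ^+ j in X0 Y0 Y1 IH *.
nra.
Qed.

Lemma PB b (s t : R) N : good b -> 0 <= s -> s <= t -> t <= 1 ->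
  \sum_(j < N) b j * t ^+ j <= \sum_(j < N) b j * s ^+ j + (N * N)%:R * (t - s).
Proof.
move=> hb s0 st t1; rewrite -lerBlDl -sumrB.
apply: le_trans (_ : \sum_(j < N) (N%:R * (t - s)) <= _).
  apply: ler_sum => j _; rewrite -mulrBr.
  have b0 := good_ge0 j hb; have b1 := good_le1 j hb.
  have h1 := XB j s0 st t1.
  have h2 : (j%:R : R) <= N%:R by rewrite ler_nat ltnW.
  have h3 : 0 <= t ^+ j - s ^+ j.
    by rewrite subr_ge0 lerXn2r // nnegrE (le_trans s0 st).
  have h4 : 0 <= t - s by rewrite subr_ge0.
  nra.
by rewrite sumr_const card_ord natrM -mulrA [in leRHS]mulr_natl.
Qed.

End P6.

Section P7.
Local Open Scope classical_set_scope.
Variable R : realType.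
Implicit Types (u v w c b : nat -> R).

Lemma bump0 i : bump 0 i = i.+1. Proof. by []. Qed.

Lemma PS0 b (s : R) N : good b -> b 0 = 0 -> 0 <= s <= 1 ->
  \sum_(j < N) b j * s ^+ j <= s * (b 1 + (1 - b 1) * s).
Proof.
move=> hb b00 /andP[s0 s1].
have t0 j : 0 <= b j * s ^+ j.
  by apply: mulr_ge0; [exact: good_ge0 | exact: exprn_ge0].
apply: le_trans (_ : \sum_(j < N.+2) b j * s ^+ j <= _).
  by rewrite !big_ord_recr /= -addrA lerDl addr_ge0.
rewrite !big_ord_recl /= !bump0 b00 mul0r add0r expr1.
have hB := hb.2 N.+2; rewrite !big_ord_recl /= !bump0 b00 add0r in hB.
set B := \sum_(i < N) b i.+2 in hB.
have : \sum_(i < N) b i.+2 * s ^+ i.+2 <= s ^+ 2 * B.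
  rewrite /B mulr_sumr; apply: ler_sum => i _.
  have -> : s ^+ i.+2 = s ^+ 2 * s ^+ i by rewrite -exprD addnC addn2.
  rewrite mulrCA; apply: ler_wpM2l; first exact: exprn_ge0.
  rewrite -[leRHS]mulr1; apply: ler_wpM2l; first exact: good_ge0.
  exact: exprn_ile1.
have B0 : 0 <= B by apply: sumr_ge0 => i _; exact: good_ge0.
rewrite expr2; nra.
Qed.

Variable b : nat -> R.
Hypothesis hb : good b.
Hypothesis hb1 : b 1 < 1.

Let y n := iterp b n 0.

Let y01 n : 0 <= y n <= 1.
Proof. have h := good_iter n hb; by rewrite /y (good_ge0 0 h) (good_le1 0 h). Qed.

Let yE n : y n.+1 = ev b (y n).
Proof.
have h := good_iter n hb.
rewrite /y -(ev0 (good_iter n.+1 hb)) -(ev0 h).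
have -> : iterp b n.+1 = comp_coef b (iterp b n) by [].
by rewrite ev_comp // lexx ler01.
Qed.

Let ymono : {homo y : n m / (n <= m)%N >-> n <= m}.
Proof.
apply/nondecreasing_seqP; elim=> [|n IH].
  by have := y01 1; rewrite /y /= => /andP[].
rewrite (yE n.+1) {1}(yE n); apply: ev_mono => //; first by case/andP: (y01 n).
by case/andP: (y01 n.+1).
Qed.

Let hsup : has_sup (range y).
Proof.
split; first by exists (y 0), 0.
by exists 1 => _ [n _ <-]; case/andP: (y01 n).
Qed.

Let q := sup (range y).

Let yq n : y n <= q.
Proof. by apply: (sup_upper_bound hsup); exists n. Qed.

Let q1 : q <= 1.
Proof. by apply: ge_sup; [exists (y 0), 0 | move=> _ [n _ <-]; case/andP: (y01 n)]. Qed.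

Let q0 : 0 <= q.
Proof. by apply: le_trans (yq 0); case/andP: (y01 0). Qed.

Lemma transience : exists t : R, 0 < t <= 1 /\
  forall d : R, 0 < d -> exists N, forall n z, (N <= n)%N -> (1 <= z)%N ->
  iterp b n z * t ^+ z <= d.
Proof.
have hgi n := good_iter n hb.
have [qpos|q00] : 0 < q \/ q = 0.
  by move: q0; rewrite le_eqVlt => /orP[/eqP <-|->]; [right|left].
- have qr : 0 <= q <= 1 by rewrite q0 q1.
  have fq : ev b q <= q.
    apply: ev_le => // N; rewrite leNgt; apply/negP => H.
    set P := \sum_(j < N) b j * q ^+ j in H.
    set M : R := (N * N)%:R.
    have M0 : 0 <= M by exact: ler0n.
    set K : R := M + 1.
    have K0 : 0 < K by rewrite /K; lra.
    set d := (P - q) / K.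
    have d0 : 0 < d by rewrite /d divr_gt0 // subr_gt0.
    have hdK : d * K = P - q by rewrite /d divfK // gt_eqF.
    have [_ [n _ <-] hn] := sup_adherent d0 hsup.
    rewrite -/q in hn; have yn := y01 n; have yqn := yq n.
    have hP := PB N hb (proj1 (andP yn)) yqn q1.
    have h1 := ev_psum N hb yn.
    rewrite -yE in h1.
    have := yq n.+1.
    rewrite -/P -/M in hP.
    rewrite /K in hdK.
    nra.
  have Fq n : 0 <= ev (iterp b n) q <= q.
    elim: n => [|n IH]; first by rewrite -[iterp b 0]/(@idp R) ev_idp // q0 lexx.
    have -> : iterp b n.+1 = comp_coef b (iterp b n) by [].
    rewrite ev_comp //; case/andP: IH => I0 I1.
    have Ir : 0 <= ev (iterp b n) q <= 1 by rewrite I0 (le_trans I1 q1).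
    rewrite (proj1 (andP (ev_good hb Ir))) /=.
    exact: le_trans (ev_mono hb I0 I1 q1) fq.
  exists q; split; first by rewrite qpos q1.
  move=> d d0; have [_ [n0 _ <-] hn0] := sup_adherent d0 hsup.
  exists n0 => n z nn0 z1.
  have h := ev_two (hgi n) qr z1; rewrite -/q in hn0.
  have := Fq n; have := ymono nn0; rewrite /y in hn0 *.
  move=> ? /andP[? ?]; lra.
- have y00 : y 0 = 0 by [].
  have b00 : b 0 = 0.
    have := yq 1; rewrite q00 yE y00 ev0 // => h.
    by apply/le_anti; rewrite h good_ge0.
  set t : R := (2^-1)%R.
  have t01 : 0 <= t <= 1 by rewrite /t; apply/andP; split; lra.
  have hb0 := good_ge0 1 hb.
  set r := b 1 + (1 - b 1) * t.
  have r0 : 0 <= r by rewrite /r /t; lra.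
  have r1 : r < 1.
    rewrite /r /t; have := hb1; have := hb0; lra.
  have Ft n : 0 <= ev (iterp b n) t <= t * r ^+ n.
    elim: n => [|n IH].
      rewrite -[iterp b 0]/(@idp R) ev_idp // expr0 mulr1 lexx andbT.
      by case/andP: t01.
    have -> : iterp b n.+1 = comp_coef b (iterp b n) by [].
    rewrite ev_comp //; case/andP: IH => I0 I1.
    set F := ev (iterp b n) t in I0 I1 *.
    have rn1 : r ^+ n <= 1 by apply: exprn_ile1 => //; exact: ltW.
    have rn0 : 0 <= r ^+ n by exact: exprn_ge0.
    have Ft : F <= t by apply: le_trans I1 _; rewrite -[leRHS]mulr1 ler_wpM2l // /t; lra.
    have Fr : 0 <= F <= 1 by rewrite I0 (le_trans Ft) //; case/andP: t01.
    rewrite (proj1 (andP (ev_good hb Fr))) /=.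
    have := ev_le hb Fr (fun N => PS0 N hb b00 Fr).
    move=> h1.
    have h2 : F * (b 1 + (1 - b 1) * F) <= F * r.
      rewrite /r; apply: ler_wpM2l; first exact: I0.
      rewrite lerD2l; apply: ler_wpM2l => //.
      by rewrite subr_ge0 ltW.
    have h3 : F * r <= t * r ^+ n * r by apply: ler_wpM2r.
    by rewrite exprSr mulrA (le_trans h1 (le_trans h2 h3)).
  exists t; split; first by rewrite /t; apply/andP; split; lra.
  move=> d d0.
  have hr : `|r| < 1 by rewrite ger0_norm.
  have /cvgrPdist_le /(_ d d0) [N _ HN] := cvg_expr hr.
  exists N => n z nN z1.
  have := HN n nN; rewrite /= sub0r normrN ger0_norm ?exprn_ge0 // => hrn.
  have h := ev_two (hgi n) t01 z1.
  have := Ft n; have := y01 n; rewrite /y.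
  move=> /andP[? ?] /andP[? ?]; rewrite /t in h *; nra.
Qed.

End P7.

Section P8.
Variable R : realType.
Implicit Types (u v w c b F : nat -> R).

Lemma psum_mono F n m : (forall i, 0 <= F i) -> (n <= m)%N ->
  \sum_(x < n) F x <= \sum_(x < m) F x.
Proof.
move=> F0; elim: m => [|m IH]; first by rewrite leqn0 => /eqP ->.
rewrite leq_eqVlt => /orP[/eqP -> //|]; rewrite ltnS => /IH h.
by rewrite big_ord_recr /= (le_trans h) // lerDl.
Qed.

Lemma strict_sum F (g : nat -> nat) n : (forall i, 0 <= F i) ->
  (forall l, (g l < g l.+1)%N) ->
  \sum_(l < n) F (g l) <= \sum_(x < g n) F x.
Proof.
move=> F0 hg; elim: n => [|n IH]; first by rewrite big_ord0 sumr_ge0.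
rewrite big_ord_recr /=; apply: le_trans (_ : \sum_(x < (g n).+1) F x <= _).
  by rewrite big_ord_recr /= lerD2r.
exact: psum_mono.
Qed.

Lemma single_sum b (u0 : nat) n : (forall i, i != u0 -> b i = 0) ->
  \sum_(i < n) b i = if (u0 < n)%N then b u0 else 0.
Proof.
move=> hb; elim: n => [|n IH]; first by rewrite big_ord0.
rewrite big_ord_recr /= IH.
case: (ltngtP u0 n) => h.
- rewrite (hb n); last by rewrite neq_ltn h orbT.
  by rewrite addr0 ltnS (ltnW h).
- rewrite (hb n); last by rewrite neq_ltn h.
  by rewrite addr0 ltnS leqNgt h.
- by rewrite h ltnSn add0r.
Qed.

Lemma caseB_bound b (u0 : nat) z k : good b -> (forall i, i != u0 -> b i = 0) ->
  pow_coef b z k <= b u0 ^+ z.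
Proof.
move=> hb h0; elim: z k => [|z IH] k.
  by rewrite expr0 /=; case: (k == 0).
have P0 j i : 0 <= pow_coef b j i := good_ge0 i (good_pow j hb).
change (\sum_(i < k.+1) b i * pow_coef b z (k - i) <= b u0 ^+ z.+1).
apply: le_trans (_ : \sum_(i < k.+1) b i * b u0 ^+ z <= _).
  apply: ler_sum => i _; apply: ler_wpM2l; [exact: good_ge0 | exact: IH].
rewrite -mulr_suml (@single_sum b u0) // exprS.
case: ifP => _; first by rewrite mulrC.
rewrite mul0r; apply: mulr_ge0; first exact: good_ge0.
by apply: exprn_ge0; exact: good_ge0.
Qed.

Lemma Kstep b (wn x j0 : nat) (M : R) : good b -> (forall k, pow_coef b wn k <= M) ->
  0 <= M ->
  pow_coef b wn.+1 x <=
  (if (j0 <= x)%N then b j0 * pow_coef b wn (x - j0) else 0) + (1 - b j0) * M.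
Proof.
move=> hb hM M0.
have P0 j i : 0 <= pow_coef b j i := good_ge0 i (good_pow j hb).
have b0 i : 0 <= b i := good_ge0 i hb.
change (\sum_(i < x.+1) b i * pow_coef b wn (x - i) <=
  (if (j0 <= x)%N then b j0 * pow_coef b wn (x - j0) else 0) + (1 - b j0) * M).
case: (leqP j0 x) => hj.
  rewrite (bigD1 (Ordinal (hj : (j0 < x.+1)%N))) //= lerD2l.
  have hs := hb.2 x.+1.
  rewrite (bigD1 (Ordinal (hj : (j0 < x.+1)%N))) //= in hs.
  apply: le_trans (_ : \sum_(i < x.+1 | i != Ordinal (hj : (j0 < x.+1)%N)) b i * M <= _).
    by apply: ler_sum => i _; apply: ler_wpM2l.
  rewrite -mulr_suml; set S := \sum_(i < x.+1 | _) b i in hs *.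
  nra.
have hs := hb.2 j0.+1.
rewrite big_ord_recr /= in hs.
have hs2 := psum_mono b0 (hj : (x.+1 <= j0)%N).
apply: le_trans (_ : \sum_(i < x.+1) b i * M <= _).
  by apply: ler_sum => i _; apply: ler_wpM2l.
rewrite -mulr_suml add0r.
set S := \sum_(i < x.+1) b i in hs2 *.
have b0j := b0 j0.
nra.
Qed.

End P8.

Lemma natA (P j0 k0 : nat) : (P <= k0)%N -> (j0 <= k0 - P)%N -> (P + j0 <= k0)%N.
Proof. lia. Qed.

Lemma natB (A L k0 : nat) : (A + L <= k0)%N -> (k0 - (A + L) + L = k0 - A)%N.
Proof. lia. Qed.

Section P9.
Variable R : realType.

Lemma anticonc (b : nat -> R) : good b -> (forall i, b i < 1) ->
  forall e : R, 0 < e -> exists Z, forall z k, (Z <= z)%N -> pow_coef b z k <= e.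
Proof.
move=> hb hb1.
have P0 j i : 0 <= pow_coef b j i := good_ge0 i (good_pow j hb).
have P1 j i : pow_coef b j i <= 1 := good_le1 i (good_pow j hb).
have b0 i : 0 <= b i := good_ge0 i hb.
have [[u0 hu0]|nB] := pselect (exists u0, forall i, i != u0 -> b i = 0).
  move=> e e0.
  have hr : `|b u0| < 1 by rewrite ger0_norm.
  have /cvgrPdist_le /(_ e e0) [N _ HN] := cvg_expr hr.
  exists N => z k hz; apply: le_trans (caseB_bound z k hb hu0) _.
  by have := HN z hz; rewrite /= sub0r normrN ger0_norm // exprn_ge0.
have [u [v [uv [bu bv]]]] : exists u v, (u < v)%N /\ 0 < b u /\ 0 < b v.
  have [u hu] : exists u, b u != 0.
    apply: contrapT => hn; apply: nB; exists 0%N => i _.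
    by case: (eqVneq (b i) 0) => // hi; exfalso; apply: hn; exists i.
  have [v [hv hbv]] : exists v, v != u /\ b v != 0.
    apply: contrapT => hn; apply: nB; exists u => i hi.
    by case: (eqVneq (b i) 0) => // h; exfalso; apply: hn; exists i.
  have bu' : 0 < b u by rewrite lt_def hu b0.
  have bv' : 0 < b v by rewrite lt_def hbv b0.
  case: (ltngtP u v) => huv; first by exists u, v.
    by exists v, u.
  by move: hv; rewrite huv eqxx.
pose nu z := pow_coef b z.
have hs z : has_sup (range (nu z)).
  split; first by exists (nu z 0%N), 0%N.
  by exists 1 => _ [k _ <-]; exact: P1.
pose s z := sup (range (nu z)).
have nus z k : nu z k <= s z by apply: (sup_upper_bound (hs z)); exists k.
have s0 z : 0 <= s z by apply: le_trans (nus z 0%N); exact: P0.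
have sS z : s z.+1 <= s z.
  apply: ge_sup; first by exists (nu z.+1 0%N), 0%N.
  move=> _ [k _ <-].
  change (\sum_(i < k.+1) b i * pow_coef b z (k - i) <= s z).
  apply: le_trans (_ : \sum_(i < k.+1) b i * s z <= _).
    by apply: ler_sum => i _; apply: ler_wpM2l; [exact: b0 | exact: nus].
  rewrite -mulr_suml -[leRHS]mul1r; apply: ler_wpM2r; first exact: s0.
  exact: hb.2.
have smono m n : (m <= n)%N -> s n <= s m.
  move=> /subnKC <-; elim: (n - m)%N => [|d IH]; first by rewrite addn0.
  by rewrite addnS (le_trans (sS _)).
move=> e e0; apply: contrapT => hne.
have se z : e <= s z.
  rewrite leNgt; apply/negP => hz; apply: hne; exists z => z' k hz'.
  apply: le_trans (nus z' k) _; apply: le_trans (smono _ _ hz') _.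
  exact: ltW.
have hinf : has_inf (range s).
  by split; [exists (s 0%N), 0%N | exists 0 => _ [z _ <-]; exact: s0].
pose mu := inf (range s).
have mue : e <= mu.
  by apply: lb_le_inf; [exists (s 0%N), 0%N | move=> _ [z _ <-]; exact: se].
have mu0 : 0 < mu by exact: lt_le_trans e0 mue.
have smu z : mu <= s z by apply: (ge_inf hinf.2); exists z.
pose beta := Num.min (b u) (b v).
have be0 : 0 < beta by rewrite lt_min bu bv.
have beu : beta <= b u by rewrite ge_min lexx.
have bev : beta <= b v by rewrite ge_min lexx orbT.
have be1 : beta <= 1 by apply: le_trans beu _; exact: ltW.
have [m hm] : exists m : nat, 2 < m%:R * mu.
  exists (Num.Def.archi_bound (2 / mu)).
  rewrite -ltr_pdivrMr //; apply: archi_boundP.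
  by apply: divr_ge0; [lra | exact: ltW].
pose d := mu * beta ^+ m / 8.
have bm0 : 0 < beta ^+ m by exact: exprn_gt0.
have d0 : 0 < d by rewrite /d; apply: divr_gt0; [exact: mulr_gt0 | lra].
pose G j := mu * beta ^+ (m - j) / 4.
have [_ [W _ <-] hW] := inf_adherent d0 hinf.
have sW z : (W <= z)%N -> s z <= mu + d.
  by move=> hz; apply: le_trans (smono _ _ hz) _; rewrite -/mu ltW.
have [_ [k0 _ <-] hk0] := sup_adherent d0 (hs (W + m)%N).
pose pos l j := (l * u + (j - l) * v)%N.
have claim : forall j, (j <= m)%N -> forall l, (l <= j)%N ->
    (pos l j <= k0)%N /\ mu + d - G j <= nu (W + (m - j))%N (k0 - pos l j)%N.
  elim=> [|j IH] hj l hl.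
    rewrite leqn0 in hl; rewrite (eqP hl).
    have -> : pos 0%N 0%N = 0%N by [].
    rewrite subn0 subn0; split; first by [].
    have G0 : G 0%N = 2 * d by rewrite /G /d subn0; lra.
    rewrite G0; have := smu (W + m)%N; move: hk0; rewrite /s => h1 h2; lra.
  have hjm : (j < m)%N := hj.
  set wn := (W + (m - j.+1))%N.
  have ewn : (W + (m - j))%N = wn.+1 by rewrite /wn -addnS subnSK.
  have Gj : G j = beta * G j.+1.
    by rewrite /G -(subnSK hjm) exprS; ring.
  have Gjb : G j <= mu * beta / 4.
    rewrite /G -(subnSK hjm) exprS.
    have := exprn_ile1 (m - j.+1) (ltW be0) be1.
    set X := beta ^+ (m - j.+1) => hX.
    apply: ler_wpM2r; first by rewrite invr_ge0; lra.
    apply: ler_wpM2l; first exact: ltW.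
    by rewrite -[leRHS]mulr1; apply: ler_wpM2l; [exact: ltW | exact: hX].
  have GS0 : 0 <= G j.+1.
    rewrite /G; apply: divr_ge0; last by lra.
    by apply: mulr_ge0; [exact: ltW | exact: exprn_ge0 (ltW be0)].
  have hMw k : nu wn k <= mu + d.
    by apply: le_trans (nus _ _) (sW _ _); rewrite /wn leq_addr.
  have Md0 : 0 <= mu + d by lra.
  have [l0 [j0 [hl0 [hj0b [hj0p hpos]]]]] : exists l0 j0 : nat, (l0 <= j)%N /\ beta <= b j0 /\ 0 < b j0 /\ pos l j.+1 = (pos l0 j + j0)%N.
    case: (leqP l j) => hlj.
      exists l, v; do !split => //.
      by rewrite /pos subSn // mulSn [(v + _)%N]addnC addnA.
    have el : l = j.+1 by apply/eqP; rewrite eqn_leq hl hlj.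
    exists j, u; do !split => //.
    by rewrite el /pos !subnn !mul0n !addn0 mulSn addnC.
  have [hp hv] := IH (ltnW hj) l0 hl0.
  rewrite ewn in hv.
  set x := (k0 - pos l0 j)%N in hv.
  have hK := Kstep x j0 hb hMw Md0.
  case: (leqP j0 x) => hjx.
    rewrite hjx in hK; split.
      rewrite hpos; move: hp hjx; rewrite /x.
      exact: natA.
    have -> : (k0 - pos l j.+1)%N = (x - j0)%N by rewrite hpos /x subnDA.
    move: hv hK; rewrite /nu => hv hK.
    nra.
  exfalso; have hjx' : (j0 <= x)%N = false by rewrite leqNgt hjx.
  rewrite hjx' in hK.
  change (is_true (pow_coef b wn.+1 x <= 0 + (1 - b j0) * (mu + d))) in hK.
  move: hv; rewrite /nu => hv.
  have h1 : beta * (mu + d) <= b j0 * (mu + d) by apply: ler_wpM2r.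
  have h2 : 0 < beta * mu by exact: mulr_gt0.
  have h3 : 0 <= beta * d by apply: mulr_ge0; exact: ltW.
  lra.
have fin l : (l <= m)%N -> 3/4 * mu <= nu W (k0 - m * v + l * (v - u))%N.
  move=> hl; have [hp hv] := claim m (leqnn m) l hl.
  have [hp0 _] := claim m (leqnn m) 0%N (leq0n m).
  rewrite subnn addn0 in hv.
  have -> : (k0 - m * v + l * (v - u))%N = (k0 - pos l m)%N.
    move: hp hp0; rewrite /pos => hp hp0.
    rewrite subn0 mul0n add0n in hp0.
    have em : (m * v = l * u + (m - l) * v + l * (v - u))%N.
      rewrite -{1}(subnK hl) mulnDl.
      have -> : (l * v = l * u + l * (v - u))%N by rewrite -mulnDr subnKC // ltnW.
      by rewrite addnA [((m - l) * v + _)%N]addnC.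
    rewrite em in hp0 *; move: (l * u + (m - l) * v)%N (l * (v - u))%N hp0.
    by move=> A L /natB.
  have Gm : G m = mu / 4 by rewrite /G subnn expr0 mulr1.
  rewrite Gm in hv; lra.
have hsum : \sum_(l < m.+1) nu W (k0 - m * v + l * (v - u))%N <= 1.
  apply: le_trans (@strict_sum _ (nu W) (fun l => (k0 - m * v + l * (v - u))%N) m.+1 _ _) _.
  - by move=> i; exact: P0.
  - by move=> l; rewrite ltn_add2l ltn_mul2r subn_gt0 uv ltnSn.
  - exact: (good_pow W hb).2.
have hsum2 : m.+1%:R * (3/4 * mu) <=
    \sum_(l < m.+1) nu W (k0 - m * v + l * (v - u))%N.
  apply: le_trans (_ : \sum_(l < m.+1) (3/4 * mu) <= _).
    by rewrite sumr_const card_ord mulr_natl.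
  apply: ler_sum => l _; apply: fin; rewrite -ltnS; exact: ltn_ord.
have := le_trans hsum2 hsum; rewrite -natr1.
nra.
Qed.

End P9.

Section P10.
Variable R : realType.
Implicit Types (x y : nat -> R).

Lemma pow_dom x y : (forall i, `|x i| <= y i) ->
  forall j k, `|pow_coef x j k| <= pow_coef y j k.
Proof.
move=> hxy; elim=> [|j IH] k; first by rewrite /= normr_nat.
change (`|\sum_(i < k.+1) x i * pow_coef x j (k - i)| <=
  \sum_(i < k.+1) y i * pow_coef y j (k - i)).
apply: le_trans (ler_norm_sum _ _ _) _; apply: ler_sum => i _.
by rewrite normrM; apply: ler_pM => //.
Qed.

Lemma comp_dom a x y : (forall i, `|x i| <= y i) -> good y ->
  good (fun i => `|a i|) ->
  forall k, `|comp_coef a x k| <= comp_coef (fun i => `|a i|) y k.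
Proof.
move=> hxy hy ha k.
have [cg _] := compE k ha hy.
set g := fun j => `|a j| * pow_coef y j k in cg.
set f := fun j => a j * pow_coef x j k.
have fg j : `|f j| <= g j.
  by rewrite /f /g normrM; apply: ler_wpM2l => //; exact: pow_dom.
have g0 j : 0 <= g j.
  by rewrite /g; apply: mulr_ge0 => //; exact: (good_pow j hy).1.
have cf : cvgn [normed series f].
  by apply: (series_le_cvg _ g0 fg cg) => j /=.
apply: le_trans (lim_series_norm cf) _.
exact: lim_series_le.
Qed.

Lemma sum_ind (D : R) (Z M : nat) : 0 <= D ->
  \sum_(z < M) (if (z < Z)%N then D else 0) <= Z%:R * D.
Proof.
move=> D0.
have -> : \sum_(z < M) (if (z < Z)%N then D else 0) = (minn M Z)%:R * D.
  elim: M => [|M IH]; first by rewrite big_ord0 min0n mul0r.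
  rewrite big_ord_recr /= IH; case: (ltnP M Z) => h.
    by rewrite (minn_idPl h) -natr1 mulrDl mul1r.
  by rewrite (minn_idPr (leqW h)) addr0.
by apply: ler_wpM2r => //; rewrite ler_nat geq_minr.
Qed.

End P10.

Unset Implicit Arguments.

Theorem corollary2 (R : realType) (a : nat -> R)
  (ha : forall i, -1 < a i < 1)
  (hsum : (\sum_(0 <= i <oo) (`|a i|)%:E <= 1)%E) :
  (sup_coef a n @[n --> \oo] --> (0 : \bar R)%E)%classic.
Proof.
pose b := fun i => `|a i|.
have hb : good b.
  split; first by move=> i; exact: normr_ge0.
  move=> n; rewrite -lee_fin; apply: le_trans hsum.
  rewrite -sumEFin.
  have := @nneseries_lim_ge R (fun i => (`|a i|)%:E) xpredT 0 n.
  by rewrite big_mkord; apply => i _ _; rewrite lee_fin.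
have hb1 i : b i < 1 by rewrite /b ltr_norml.
have dom n k : `|iterp a n k| <= iterp b n k.
  elim: n k => [|n IH] k; first by rewrite /= normr_nat.
  change (`|comp_coef a (iterp a n) k| <= comp_coef b (iterp b n) k).
  exact: comp_dom IH (good_iter n hb) hb k.
have key e : 0 < e -> exists N, forall n k, (N <= n)%N -> (1 <= k)%N ->
    iterp b n k <= e.
  move=> e0.
  have e20 : 0 < e / 2 by lra.
  have [Z hZ] := anticonc hb hb1 e20.
  have [t [/andP[t0 t1] htr]] := transience hb (hb1 1%N).
  set D := e / 2 / Z.+1%:R.
  have D0 : 0 < D by rewrite /D divr_gt0 // ltr0n.
  have DZ : Z.+1%:R * D = e / 2 by rewrite /D mulrC divfK // pnatr_eq0.
  have tZ0 : 0 < t ^+ Z := exprn_gt0 _ t0.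
  have [N hN] := htr (D * t ^+ Z) (mulr_gt0 D0 tZ0).
  exists N.+1 => -[|n] k // hn hk.
  rewrite ltnS in hn.
  have hgi := good_iter n hb.
  rewrite iter_comm //.
  have [cv _] := compE k hgi hb.
  rewrite /comp_coef; apply: limr_le cv _; apply: nearW => M.
  rewrite seriesEord /=.
  set c := iterp b n.
  have tb z : c z * pow_coef b z k <= (if (z < Z)%N then D else 0) + e / 2 * c z.
    have c0 := good_ge0 z hgi.
    have P0 := (good_pow z hb).1 k.
    have P1 := good_le1 k (good_pow z hb).
    case: (ltnP z Z) => hzZ.
      case: z hzZ c0 P0 P1 => [|z] hzZ c0 P0 P1.
        have -> : pow_coef b 0 k = 0 by rewrite /= eqn0Ngt hk.
        by rewrite mulr0 addr_ge0 // ?mulr_ge0 // ltW.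
      have h1 := hN n z.+1 hn (isT : (0 < z.+1)%N).
      have h2 : t ^+ Z <= t ^+ z.+1 by apply: (ler_wiXn2l (ltW t0) t1); exact: ltnW.
      have h3 : c z.+1 <= D.
        have tz0 : 0 < t ^+ z.+1 := exprn_gt0 _ t0.
        rewrite -(ler_pM2r tz0); apply: le_trans h1 _.
        by apply: ler_wpM2l => //; exact: ltW.
      have h4 : c z.+1 * pow_coef b z.+1 k <= c z.+1.
        by rewrite -[leRHS]mulr1; apply: ler_wpM2l.
      have h5 : 0 <= e / 2 * c z.+1 by apply: mulr_ge0 => //; exact: ltW.
      lra.
    have := hZ z k hzZ; move=> h6.
    have h7 : c z * pow_coef b z k <= c z * (e / 2) by apply: ler_wpM2l.
    by rewrite add0r [_ * c z]mulrC.
  apply: le_trans (_ : \sum_(z < M) ((if (z < Z)%N then D else 0) + e / 2 * c z) <= _).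
    by apply: ler_sum => z _; exact: tb.
  rewrite big_split /= -mulr_sumr.
  have h1 := sum_ind Z M (ltW D0).
  have h2 := hgi.2 M.
  have h3 : e / 2 * \sum_(i < M) c i <= e / 2 by rewrite -[leRHS]mulr1; apply: ler_wpM2l => //; exact: ltW.
  rewrite -natr1 mulrDl mul1r in DZ.
  lra.
have sup0 n : (0 <= sup_coef a n)%E.
  apply: le_trans (_ : (`|iterp a n 1|)%:E <= _)%E; first by rewrite lee_fin.
  by apply: ereal_sup_ubound; exists 1%N.
have supub n e : (forall k, (1 <= k)%N -> `|iterp a n k| <= e) ->
    (sup_coef a n <= e%:E)%E.
  by move=> h; apply: ub_ereal_sup => _ [k hk <-]; rewrite lee_fin; exact: h.
have [N1 hN1] := key 1 ltr01.
apply: cvg_EFin.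
  exists N1 => // n /= hn.
  rewrite ge0_fin_numE // (le_lt_trans (supub n 1 _)) ?ltey //.
  by move=> k hk; apply: le_trans (dom n k) (hN1 n k hn hk).
apply/cvgrPdist_le => e e0.
have [N hN] := key e e0.
exists N => // n /= hn.
have hs : (sup_coef a n <= e%:E)%E.
  by apply: supub => k hk; apply: le_trans (dom n k) (hN n k hn hk).
rewrite sub0r normrN ger0_norm; last exact: fine_ge0.
by rewrite -lee_fin fineK // ge0_fin_numE // (le_lt_trans hs) ?ltey.
Qed.
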